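(* The group $G_3$ has exponential word growth (with respect to the generating set $\{a,b,c\}$).
   Context: Let $X=\{1,2,3\}$ and $T$ the ternary rooted tree with vertex set $X^*$. $\mathrm{Aut}(T)$ is the group of root-preserving automorphisms with product left-to-right: $(gh)(u)=h(g(u))$. Sections $g|_u$ are defined by $g(uv)=g(u)\,g|_u(v)$; we write $g=(g|_1,g|_2,g|_3)\lambda_g$ with $\lambda_g\in S_3$ the action on the first level; $e$ is the identity. $G_3=\langle a,b,c\rangle\le\mathrm{Aut}(T)$ with $a=(a,b,e)(1\,2)$, $b=(e,b,c)(2\,3)$, $c=(a,e,c)(3\,1)$. *)

(* Defs.v *)
From Stdlib Require Import List Reals.
Import ListNotations.

Inductive X : Type := x1 | x2 | x3.

Definition X_eqb (x y : X) : bool :=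
  match x, y with
  | x1, x1 | x2, x2 | x3, x3 => true
  | _, _ => false
  end.

(** Vertices of the ternary rooted tree T: finite words over X. *)
Definition vertex := list X.

(** States of the automaton defining a, b, c (and the identity e). *)
Inductive st : Type := Sa | Sb | Sc | Se.

(** lambda_g : action on the first level. *)
Definition perm (s : st) (x : X) : X :=
  match s, x with
  | Sa, x1 => x2 | Sa, x2 => x1
  | Sb, x2 => x3 | Sb, x3 => x2
  | Sc, x3 => x1 | Sc, x1 => x3
  | _, x => x
  end.

Definition sect (s : st) (x : X) : st :=
  match s, x with
  | Sa, x1 => Sa | Sa, x2 => Sb | Sa, x3 => Se
  | Sb, x1 => Se | Sb, x2 => Sb | Sb, x3 => Sc
  | Sc, x1 => Sa | Sc, x2 => Se | Sc, x3 => Sc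
  | Se, _ => Se
  end.

Fixpoint act (s : st) (u : vertex) : vertex :=
  match u with
  | [] => []
  | x :: w => perm s x :: act (sect s x) w
  end.

Definition perm_inv (s : st) (y : X) : X :=
  if X_eqb (perm s x1) y then x1
  else if X_eqb (perm s x2) y then x2 else x3.

Fixpoint act_inv (s : st) (u : vertex) : vertex :=
  match u with
  | [] => []
  | y :: w => let x := perm_inv s y in x :: act_inv (sect s x) w
  end.

(** Letters of the symmetric generating set {a,b,c}^{+-1}: (s, true) is s^{-1}. *)
Definition letter := (st * bool)%type.

Definition is_gen (l : letter) : Prop := fst l <> Se.

Definition act_letter (l : letter) : vertex -> vertex :=
  if snd l then act_inv (fst l) else act (fst l).

(** Evaluation of a word g1 g2 ... gk as an element of Aut(T),
    with (gh)(u) = h(g(u)), i.e. g1 acts first. *)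
Fixpoint eval (w : list letter) (u : vertex) : vertex :=
  match w with
  | [] => u
  | l :: w' => eval w' (act_letter l u)
  end.

Definition same_elt (w1 w2 : list letter) : Prop :=
  forall u : vertex, eval w1 u = eval w2 u.

Definition in_ball_word (n : nat) (w : list letter) : Prop :=
  (length w <= n)%nat /\ Forall is_gen w.

Definition ball_card_ge (n m : nat) : Prop :=
  exists ws : list (list letter),
    length ws = m /\ Forall (in_ball_word n) ws /\
    ForallOrdPairs (fun w1 w2 => ~ same_elt w1 w2) ws.

Definition exponential_growth : Prop :=
  exists r : R, (1 < r)%R /\
    forall n : nat, exists m : nat, ball_card_ge n m /\ (r ^ n <= INR m)%R.

(* Main.v *)
Require Import Defs.
From Stdlib Require Import List Reals.
From Stdlib Require Import Lia Lra Arith Bool.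
Open Scope bool_scope.
Import ListNotations.

Inductive gen := GA | GB | GC.

Definition gen_eq_dec (g h : gen) : {g = h} + {g <> h}.
Proof. decide equality. Defined.

Definition geqb (g h : gen) : bool :=
  match g, h with GA, GA | GB, GB | GC, GC => true | _, _ => false end.

Lemma geqb_eq g h : geqb g h = true <-> g = h.
Proof. destruct g, h; simpl; split; congruence. Qed.

Definition tost (g : gen) : st := match g with GA => Sa | GB => Sb | GC => Sc end.
Definition fixpt (g : gen) : X := match g with GA => x3 | GB => x1 | GC => x2 end.
Definition gmove (g : gen) (x : X) : X := perm (tost g) x.
Definition moves (g : gen) (x : X) : bool := negb (X_eqb x (fixpt g)).
Definition phi (x : X) : gen := match x with x1 => GA | x2 => GB | x3 => GC end.

Lemma X_eqb_eq x y : X_eqb x y = true <-> x = y.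
Proof. destruct x, y; simpl; split; congruence. Qed.

Lemma sect_gen g x : sect (tost g) x = if moves g x then tost (phi x) else Se.
Proof. destruct g, x; reflexivity. Qed.

Lemma gmove_fix g x : moves g x = false -> gmove g x = x.
Proof. unfold gmove, moves; destruct g, x; simpl; congruence. Qed.

Lemma phi_inj x y : phi x = phi y -> x = y.
Proof. destruct x, y; simpl; congruence. Qed.

Fixpoint sec (w : list gen) (x : X) : list gen :=
  match w with
  | [] => []
  | g :: w' => if moves g x then phi x :: sec w' (gmove g x) else sec w' x
  end.

Fixpoint wperm (w : list gen) (x : X) : X :=
  match w with [] => x | g :: w' => wperm w' (gmove g x) end.

Definition pw (w : list gen) : list letter := map (fun g => (tost g, false)) w.

Lemma act_Se t : act Se t = t.
Proof. induction t; simpl; [reflexivity|]. destruct a; simpl; rewrite IHt; reflexivity. Qed.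

Lemma eval_pw w : forall x t,
  eval (pw w) (x :: t) = wperm w x :: eval (pw (sec w x)) t.
Proof.
  induction w as [|g w IH]; intros x t; [reflexivity|].
  simpl. unfold act_letter; simpl.
  rewrite sect_gen. destruct (moves g x) eqn:E.
  - rewrite IH. reflexivity.
  - rewrite act_Se. unfold gmove in IH. rewrite (gmove_fix _ _ E) in *.
    specialize (IH x t). unfold gmove in E. 
    assert (perm (tost g) x = x) as P by (apply gmove_fix; exact E).
    rewrite P. exact IH.
Qed.

Lemma same_split u v : same_elt (pw u) (pw v) ->
  (forall x, wperm u x = wperm v x) /\ (forall x, same_elt (pw (sec u x)) (pw (sec v x))).
Proof.
  intros H; split.
  - intros x. specialize (H [x]). rewrite !eval_pw in H. congruence.
  - intros x t. specialize (H (x :: t)). rewrite !eval_pw in H. congruence.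
Qed.

Lemma act_act_inv s t : act s (act_inv s t) = t.
Proof.
  revert s; induction t as [|y t IH]; intros s; [reflexivity|].
  destruct s, y; simpl; rewrite IH; reflexivity.
Qed.

Lemma cancel g u v : same_elt (pw (g :: u)) (pw (g :: v)) -> same_elt (pw u) (pw v).
Proof.
  intros H t. specialize (H (act_inv (tost g) t)). simpl in H.
  unfold act_letter in H; simpl in H. rewrite act_act_inv in H. exact H.
Qed.

Lemma len_sec w : forall x, length (sec w x) <= length w.
Proof.
  induction w as [|g w IH]; intros x; simpl; [lia|].
  destruct (moves g x); simpl; [specialize (IH (gmove g x))|specialize (IH x)]; lia.
Qed.

Lemma sec_nil_perm w : forall y, sec w y = [] -> wperm w y = y.
Proof.
  induction w as [|g w IH]; intros y H; simpl in *; [reflexivity|].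
  destruct (moves g y) eqn:E; [discriminate|].
  rewrite (gmove_fix _ _ E). apply IH; exact H.
Qed.

Lemma sec_head w : forall y h t, sec w y = h :: t -> h = phi y.
Proof.
  induction w as [|g w IH]; intros y h t H; simpl in *; [discriminate|].
  destruct (moves g y); [congruence|]. eapply IH; eauto.
Qed.

Lemma sec_app p r : forall x, sec (p ++ r) x = sec p x ++ sec r (wperm p x).
Proof.
  induction p as [|g p IH]; intros x; simpl; [reflexivity|].
  destruct (moves g x) eqn:E; simpl; rewrite IH; [reflexivity|].
  rewrite (gmove_fix _ _ E). reflexivity.
Qed.

Fixpoint norep (w : list gen) : bool :=
  match w with
  | g :: ((h :: _) as t) => negb (geqb g h) && norep t
  | _ => true
  end.

Lemma moves_gmove_neq g x : moves g x = true -> gmove g x <> x.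
Proof. unfold gmove, moves; destruct g, x; simpl; congruence. Qed.

Lemma norep_sec w : forall x, norep (sec w x) = true.
Proof.
  induction w as [|g w IH]; intros x; simpl; [reflexivity|].
  destruct (moves g x) eqn:E; [|apply IH].
  destruct (sec w (gmove g x)) as [|h t] eqn:S; [reflexivity|].
  pose proof (sec_head _ _ _ _ S) as Hh. subst h.
  change (negb (geqb (phi x) (phi (gmove g x))) && norep (phi (gmove g x) :: t) = true).
  rewrite <- S, IH. rewrite Bool.andb_true_r.
  destruct (geqb (phi x) (phi (gmove g x))) eqn:G; [|reflexivity].
  apply geqb_eq, phi_inj in G. exfalso. apply (moves_gmove_neq g x E). auto.
Qed.

Definition full (w : list gen) (x : X) : Prop := length (sec w x) = length w.

Lemma full_cons g w x : full (g :: w) x -> moves g x = true /\ full w (gmove g x).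
Proof.
  unfold full; simpl. destruct (moves g x) eqn:E.
  - simpl. intros H. split; [reflexivity|lia].
  - intros H. pose proof (len_sec w x). lia.
Qed.

Lemma two_movers g1 g2 x y : x <> y -> moves g1 x = true -> moves g1 y = true ->
  moves g2 (gmove g1 x) = true -> moves g2 (gmove g1 y) = true -> g1 = g2.
Proof.
  unfold moves, gmove. destruct g1, g2, x, y; simpl; congruence.
Qed.

Lemma L7 u x y : norep u = true -> full u x -> full u y -> x <> y -> length u <= 1.
Proof.
  intros N Fx Fy D. destruct u as [|g1 [|g2 r]]; simpl; try lia.
  apply full_cons in Fx as [M1x Fx]. apply full_cons in Fy as [M1y Fy].
  apply full_cons in Fx as [M2x _]. apply full_cons in Fy as [M2y _].
  pose proof (two_movers _ _ _ _ D M1x M1y M2x M2y). subst g2.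
  simpl in N. destruct g1; simpl in N; discriminate.
Qed.

Lemma L7' u x y : norep u = true -> full u x -> x <> y -> 2 <= length u ->
  length (sec u y) < length u.
Proof.
  intros N F D L. pose proof (len_sec u y).
  destruct (Nat.eq_dec (length (sec u y)) (length u)) as [E|E]; [|lia].
  pose proof (L7 u x y N F E D). lia.
Qed.

Lemma norep_firstn k u : norep u = true -> norep (firstn k u) = true.
Proof.
  revert u; induction k as [|k IH]; intros u N; [reflexivity|].
  destruct u as [|g u]; [reflexivity|].
  destruct u as [|h u]; [destruct k; reflexivity|].
  simpl in N. apply andb_prop in N as [N1 N2].
  specialize (IH (h :: u) N2).
  destruct k; [reflexivity|]. simpl firstn in *. cbn [norep]. rewrite N1. exact IH.
Qed.

Lemma full_firstn k u x : full u x -> full (firstn k u) x.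
Proof.
  unfold full. intros F.
  pose proof (firstn_skipn k u) as E.
  rewrite <- E in F. rewrite sec_app, !length_app in F.
  pose proof (len_sec (firstn k u) x). pose proof (len_sec (skipn k u) (wperm (firstn k u) x)).
  lia.
Qed.

Fixpoint prefixb (s t : list gen) : bool :=
  match s, t with
  | [], _ => true
  | a :: s', b :: t' => geqb a b && prefixb s' t'
  | _ :: _, [] => false
  end.

Lemma prefixb_app s e : prefixb s (s ++ e) = true.
Proof.
  induction s as [|a s IH]; simpl; [reflexivity|].
  rewrite IH. destruct a; reflexivity.
Qed.

Fixpoint leqb (s t : list gen) : bool :=
  match s, t with
  | [], [] => true
  | a :: s', b :: t' => geqb a b && leqb s' t'
  | _, _ => false
  end.

Lemma leqb_refl s : leqb s s = true.
Proof. induction s as [|a s IH]; simpl; [reflexivity|]. rewrite IH; destruct a; reflexivity. Qed.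

Definition diffg (s : list gen) (ep : bool) (t : list gen) (eq : bool) : bool :=
  if ep then (if eq then negb (leqb s t) else negb (prefixb t s))
  else (if eq then negb (prefixb s t) else negb (prefixb s t) && negb (prefixb t s)).

Lemma diffg_sound s ep t eq e1 e2 :
  diffg s ep t eq = true -> (ep = true -> e1 = []) -> (eq = true -> e2 = []) ->
  s ++ e1 <> t ++ e2.
Proof.
  intros D H1 H2 E. unfold diffg in D.
  destruct ep, eq.
  - rewrite H1, H2 in E by reflexivity. rewrite !app_nil_r in E. subst. rewrite leqb_refl in D. discriminate.
  - rewrite H1 in E by reflexivity. rewrite app_nil_r in E. subst. rewrite prefixb_app in D. discriminate.
  - rewrite H2 in E by reflexivity. rewrite app_nil_r in E. rewrite <- E in D. rewrite prefixb_app in D. discriminate.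
  - apply app_eq_app in E as [l [[E3 _]|[E3 _]]]; subst.
    + rewrite prefixb_app in D. rewrite andb_false_r in D. discriminate.
    + rewrite prefixb_app in D. discriminate.
Qed.

Fixpoint wordsn (n : nat) : list (list gen) :=
  match n with
  | 0 => [[]]
  | S n => map (cons GA) (wordsn n) ++ map (cons GB) (wordsn n) ++ map (cons GC) (wordsn n)
  end.

Lemma In_wordsn w : In w (wordsn (length w)).
Proof.
  induction w as [|g w IH]; simpl; [auto|].
  rewrite !in_app_iff. destruct g; [left|right;left|right;right]; apply in_map; exact IH.
Qed.

Lemma wordsn_len n w : In w (wordsn n) -> length w = n.
Proof.
  revert w; induction n as [|n IH]; intros w H; simpl in H.
  - destruct H as [H|[]]; subst; reflexivity.
  - rewrite !in_app_iff in H. destruct H as [H|[H|H]]; apply in_map_iff in H as [w' [E H]];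
    subst; simpl; rewrite (IH _ H); reflexivity.
Qed.

Lemma wordsn_length n : length (wordsn n) = 3 ^ n.
Proof.
  induction n as [|n IH]; simpl; [reflexivity|].
  rewrite !length_app, !length_map, IH. lia.
Qed.

Lemma wordsn_nodup n : NoDup (wordsn n).
Proof.
  induction n as [|n IH]; simpl.
  - constructor; [simpl; tauto| constructor].
  - assert (forall g, NoDup (map (cons g) (wordsn n))).
    { intros g. apply NoDup_map_NoDup_ForallPairs; [|exact IH]. intros a b _ _ E; congruence. }
    apply NoDup_app; [auto| apply NoDup_app; [auto|auto|] |].
    + intros a Ha Hb. apply in_map_iff in Ha as [? [<- _]]. apply in_map_iff in Hb as [? [E _]]. discriminate.
    + intros a Ha Hb. apply in_map_iff in Ha as [? [<- _]]. apply in_app_iff in Hb as [Hb|Hb];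
      apply in_map_iff in Hb as [? [E _]]; discriminate.
Qed.

Definition words5 : list (list gen) := flat_map wordsn [0;1;2;3;4;5].

Lemma In_words5 w : length w <= 5 -> In w words5.
Proof.
  intros L. unfold words5. apply in_flat_map. exists (length w). split; [|apply In_wordsn].
  destruct (length w) as [|[|[|[|[|[|k]]]]]]; simpl; try tauto; lia.
Qed.

Definition headeqb (p q : list gen) : bool :=
  match p, q with
  | g :: _, h :: _ => geqb g h
  | [], [] => true
  | _, _ => false
  end.

Definition fullb (w : list gen) (x : X) : bool := Nat.eqb (length (sec w x)) (length w).

Definition permeqb (p q : list gen) : bool :=
  forallb (fun z => X_eqb (wperm p z) (wperm q z)) [x1; x2; x3].

Definition condb (p q : list gen) (x : X) : bool :=
  let ep := Nat.ltb (length p) 5 in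
  let eq := Nat.ltb (length q) 5 in
  (ep && eq && negb (permeqb p q)) ||
  existsb (fun y => negb (X_eqb y x) && diffg (sec p y) ep (sec q y) eq &&
                    (negb (ep && eq) || Nat.ltb (length (sec p y) + length (sec q y)) (length p + length q)))
          [x1; x2; x3].

Definition checkb : bool :=
  forallb (fun x => forallb (fun p => forallb (fun q =>
     implb (norep p && norep q && fullb p x && fullb q x && negb (headeqb p q)) (condb p q x))
     words5) words5) [x1; x2; x3].

Lemma checkb_true : checkb = true.
Proof. vm_compute. reflexivity. Qed.

Lemma sec_split u y : sec u y = sec (firstn 5 u) y ++ sec (skipn 5 u) (wperm (firstn 5 u) y).
Proof. rewrite <- sec_app, firstn_skipn. reflexivity. Qed.

Lemma short_eq (u : list gen) : Nat.ltb (length (firstn 5 u)) 5 = true -> skipn 5 u = [] /\ firstn 5 u = u.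
Proof.
  intros H. apply Nat.ltb_lt in H. rewrite length_firstn in H.
  split; [apply skipn_all2 | apply firstn_all2]; lia.
Qed.

Lemma long_len (u : list gen) : Nat.ltb (length (firstn 5 u)) 5 = false -> 5 <= length u.
Proof. intros H. apply Nat.ltb_ge in H. rewrite length_firstn in H. lia. Qed.

Lemma M0 u v x : norep u = true -> norep v = true -> full u x -> full v x ->
  headeqb u v = false -> (forall z, wperm u z = wperm v z) ->
  exists y, sec u y <> sec v y /\ length (sec u y) + length (sec v y) < length u + length v.
Proof.
  intros Nu Nv Fu Fv Hd Hp.
  set (p := firstn 5 u). set (q := firstn 5 v).
  assert (C : condb p q x = true).
  { pose proof checkb_true as K. unfold checkb in K.
    assert (Ix : In x [x1;x2;x3]) by (destruct x; simpl; auto).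
    rewrite forallb_forall in K. specialize (K x Ix).
    assert (Ip : In p words5) by (apply In_words5; unfold p; rewrite length_firstn; lia).
    assert (Iq : In q words5) by (apply In_words5; unfold q; rewrite length_firstn; lia).
    rewrite forallb_forall in K. specialize (K p Ip).
    rewrite forallb_forall in K. specialize (K q Iq).
    assert (H1 : norep p = true) by (apply norep_firstn; auto).
    assert (H2 : norep q = true) by (apply norep_firstn; auto).
    assert (H3 : fullb p x = true) by (apply Nat.eqb_eq, full_firstn; auto).
    assert (H4 : fullb q x = true) by (apply Nat.eqb_eq, full_firstn; auto).
    assert (H5 : headeqb p q = false).
    { unfold p, q. destruct u, v; simpl in *; auto. }
    rewrite H1, H2, H3, H4, H5 in K. exact K. }
  unfold condb in C. apply orb_true_iff in C as [C|C].
  - apply andb_prop in C as [C1 C2]. apply andb_prop in C1 as [E1 E2].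
    destruct (short_eq u E1) as [_ Eu]. destruct (short_eq v E2) as [_ Ev].
    fold p q in Eu, Ev. rewrite Eu, Ev in C2.
    exfalso. unfold permeqb in C2. simpl in C2. rewrite !Hp in C2.
    destruct (wperm v x1), (wperm v x2), (wperm v x3); discriminate.
  - apply existsb_exists in C as [y [_ C]].
    apply andb_prop in C as [C1 C3]. apply andb_prop in C1 as [C0 C2].
    assert (Dy : y <> x). { intros ->. destruct x; discriminate. }
    exists y. split.
    + rewrite (sec_split u y), (sec_split v y).
      eapply diffg_sound; [exact C2| |]; intros E; rewrite (proj1 (short_eq _ E)); reflexivity.
    + pose proof (len_sec u y). pose proof (len_sec v y).
      destruct (Nat.ltb (length p) 5) eqn:E1; destruct (Nat.ltb (length q) 5) eqn:E2; simpl in C3.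
      * apply Nat.ltb_lt in C3. destruct (short_eq u E1) as [_ Eu]. destruct (short_eq v E2) as [_ Ev].
        fold p q in Eu, Ev. rewrite <- Eu, <- Ev. exact C3.
      * pose proof (long_len v E2). pose proof (L7' v x y Nv Fv (fun E => Dy (eq_sym E)) ltac:(lia)). lia.
      * pose proof (long_len u E1). pose proof (L7' u x y Nu Fu (fun E => Dy (eq_sym E)) ltac:(lia)). lia.
      * pose proof (long_len u E1). pose proof (L7' u x y Nu Fu (fun E => Dy (eq_sym E)) ltac:(lia)). lia.
Qed.

Lemma some_mover g : exists x, moves g x = true.
Proof. destruct g; [exists x1|exists x2|exists x1]; reflexivity. Qed.

Lemma common_mover g h : geqb g h = false ->
  exists k, moves g k = true /\ moves h k = true /\ gmove g k <> gmove h k.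
Proof.
  unfold gmove, moves; destruct g, h; simpl; intros E; try discriminate;
  first [exists x1; split; [reflexivity|split;[reflexivity|discriminate]]
        |exists x2; split; [reflexivity|split;[reflexivity|discriminate]]
        |exists x3; split; [reflexivity|split;[reflexivity|discriminate]]].
Qed.

Lemma diff_first u v : headeqb u v = false -> (forall z, wperm u z = wperm v z) ->
  exists x, sec u x <> sec v x.
Proof.
  intros Hd Hp. destruct u as [|g u], v as [|h v]; simpl in Hd; try discriminate.
  - destruct (some_mover h) as [x M]. exists x. simpl. rewrite M. discriminate.
  - destruct (some_mover g) as [x M]. exists x. simpl. rewrite M. discriminate.
  - destruct (common_mover g h Hd) as [k [Mg [Mh D]]]. exists k. simpl. rewrite Mg, Mh.
    intros E. injection E as E.
    destruct (sec u (gmove g k)) as [|a t] eqn:S1.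
    + symmetry in E. apply sec_nil_perm in E. apply sec_nil_perm in S1.
      specialize (Hp k). simpl in Hp. congruence.
    + destruct (sec v (gmove h k)) as [|b t'] eqn:S2; [discriminate|].
      apply sec_head in S1. apply sec_head in S2. injection E as E _. subst.
      apply phi_inj in E. contradiction.
Qed.

Definition mu (w : list gen) : nat := if norep w then 0 else 1.

Lemma list_gen_dec (u v : list gen) : {u = v} + {u <> v}.
Proof. apply list_eq_dec, gen_eq_dec. Qed.

Theorem pos_free : forall n u v,
  3 * (length u + length v) + mu u + mu v < n -> same_elt (pw u) (pw v) -> u = v.
Proof.
  induction n as [|n IH]; intros u v Hm Hs; [lia|].
  destruct (list_gen_dec u v) as [|Hne]; [assumption|exfalso].
  destruct (same_split u v Hs) as [Hp Hsec].
  assert (Hmu : forall w, mu w <= 1) by (intros w; unfold mu; destruct (norep w); lia).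
  assert (Hmu0 : forall w x, mu (sec w x) = 0) by (intros w x; unfold mu; rewrite norep_sec; reflexivity).
  destruct (headeqb u v) eqn:Hd.
  - destruct u as [|g u], v as [|h v]; simpl in Hd; try discriminate.
    + apply Hne; reflexivity.
    + apply geqb_eq in Hd. subst h. apply Hne. f_equal.
      apply IH; [|exact (cancel g u v Hs)].
      simpl in Hm. pose proof (Hmu u). pose proof (Hmu v). pose proof (Hmu (g::u)). lia.
  - destruct (diff_first u v Hd Hp) as [x Dx].
    pose proof (len_sec u x) as Lu. pose proof (len_sec v x) as Lv.
    destruct (Nat.lt_ge_cases (length (sec u x) + length (sec v x)) (length u + length v)) as [Lt|Ge].
    + apply Dx. apply IH; [|apply Hsec]. rewrite !Hmu0. pose proof (Hmu u). lia.
    + assert (Fu : full u x) by (unfold full; lia).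
      assert (Fv : full v x) by (unfold full; lia).
      destruct (Nat.eq_dec (mu u + mu v) 0) as [Z|NZ].
      * assert (Nu : norep u = true) by (unfold mu in Z; destruct (norep u); [reflexivity|lia]).
        assert (Nv : norep v = true) by (unfold mu in Z; destruct (norep v); [reflexivity|lia]).
        destruct (M0 u v x Nu Nv Fu Fv Hd Hp) as [y [Dy Ly]].
        apply Dy. apply IH; [|apply Hsec]. rewrite !Hmu0. lia.
      * apply Dx. apply IH; [|apply Hsec]. rewrite !Hmu0. lia.
Qed.

Lemma fop_words (l : list (list gen)) : NoDup l ->
  ForallOrdPairs (fun w1 w2 => ~ same_elt w1 w2) (map pw l).
Proof.
  induction 1 as [|a l Ha Hl IHl]; simpl; constructor; [|exact IHl].
  apply Forall_forall. intros b Hb. apply in_map_iff in Hb as [b' [<- Hb']].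
  intros S. apply Ha. rewrite (pos_free _ a b' (Nat.lt_succ_diag_r _) S). exact Hb'.
Qed.

Theorem corollary5p3 : exponential_growth.
Proof.
  exists 3%R. split; [lra|]. intros n. exists (3 ^ n). split.
  - exists (map pw (wordsn n)). split; [rewrite length_map; apply wordsn_length|]. split.
    + apply Forall_forall. intros w Hw. apply in_map_iff in Hw as [w' [<- Hw']].
      split.
      * unfold pw. rewrite length_map, (wordsn_len _ _ Hw'). lia.
      * unfold pw. apply Forall_forall. intros l Hl. apply in_map_iff in Hl as [g [<- _]].
        unfold is_gen. destruct g; simpl; discriminate.
    + apply fop_words, wordsn_nodup.
  - rewrite pow_INR. simpl INR. right. f_equal. ring.
Qed.
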